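(* Let $G=(V,E)$ be an undirected graph with two distinct vertices $s,t\in V$ and let $k$ be an integer. Let $G''$ be the graph obtained from $G$ by adding two new vertices $s',t'$ and the two edges $\{s',s\}$ and $\{t,t'\}$, and let $G'$ be the third power of $G''$. Then there is a set $S\subseteq V\setminus\{s,t\}$ such that $G-S$ has no $s$-$t$ path and $|N_G[S]|\le k$ if and only if there is a set $S'\subseteq V(G')\setminus\{s',t'\}$ such that $G'-S'$ has no $s'$-$t'$ path and $|S'|\le k$.
   Context: For $x\in\mathbb{N}$, the $x$-th power of a graph $H=(V,E)$ is the graph on vertex set $V$ in which two distinct vertices $u,v$ are adjacent if and only if their distance in $H$ is at most $x$. $N_G[S]=S\cup\bigcup_{v\in S}N_G(v)$ denotes the closed neighborhood of $S$ in $G$. *)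

(* Defs.v *)
From mathcomp Require Import all_boot all_order all_algebra.
Set Implicit Arguments. Unset Strict Implicit. Unset Printing Implicit Defensive.

(* A finite simple undirected graph is given by a symmetric irreflexive
   boolean relation e on a finType T. *)

Fixpoint within_dist (T : finType) (e : rel T) (n : nat) (u v : T) : bool :=
  match n with
  | 0 => u == v
  | n'.+1 => within_dist e n' u v || [exists w, within_dist e n' u w && e w v]
  end.

Definition graph_power (T : finType) (e : rel T) (x : nat) : rel T :=
  fun u v => (u != v) && within_dist e x u v.

Definition del_verts (T : finType) (e : rel T) (S : {set T}) : rel T :=
  fun u v => [&& u \notin S, v \notin S & e u v].

Definition has_path_avoiding (T : finType) (e : rel T) (S : {set T}) (s t : T) : bool :=
  (s \notin S) && connect (del_verts e S) s t.

Definition closed_nbhd (T : finType) (e : rel T) (S : {set T}) : {set T} :=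
  S :|: [set v | [exists u in S, e u v]].

(* The graph G'' on T + bool: inr false = s', inr true = t';
   edges of G plus {s',s} and {t,t'}. *)
Definition ext_graph (T : finType) (e : rel T) (s t : T) : rel (T + bool)%type :=
  fun x y =>
    match x, y with
    | inl a, inl b => e a b
    | inl a, inr b => if b then a == t else a == s
    | inr a, inl b => if a then b == t else b == s
    | inr _, inr _ => false
    end.

Definition s' (T : finType) : (T + bool)%type := inr false.
Definition t' (T : finType) : (T + bool)%type := inr true.

(* Main.v *)
Require Import Defs.
From mathcomp Require Import all_boot all_order all_algebra.
Import Order.TTheory GRing.Theory Num.Theory.
Set Implicit Arguments. Unset Strict Implicit.

Section Aux.
Variable (U : finType) (r : rel U).

Lemma wd_S n u v : within_dist r n u v -> within_dist r n.+1 u v.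
Proof. by move=> h /=; rewrite h. Qed.

Lemma wd_step n u w v : within_dist r n u w -> r w v -> within_dist r n.+1 u v.
Proof. move=> h1 h2 /=; apply/orP; right; apply/existsP; exists w; by rewrite h1. Qed.

Lemma wd_trans m n u w v :
  within_dist r m u w -> within_dist r n w v -> within_dist r (m + n) u v.
Proof.
move=> h1; elim: n v => [|n IH] v /=.
  by move/eqP<-; rewrite addn0.
case/orP=> [h|/existsP[x /andP[hx hxv]]].
  by rewrite addnS; apply: wd_S; apply: IH.
by rewrite addnS; exact: (wd_step (IH _ hx) hxv).
Qed.

Lemma wd_path n u v : within_dist r n u v ->
  exists p, [/\ path r u p, last u p = v & size p <= n].
Proof.
elim: n v => [|n IH] v /=.
  by move/eqP<-; exists [::].
case/orP=> [h|/existsP[x /andP[hx hxv]]].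
  by have [p [h1 h2 h3]] := IH _ h; exists p; split=> //; apply: leqW.
have [p [h1 h2 h3]] := IH _ hx.
exists (rcons p v); rewrite rcons_path last_rcons size_rcons h1 h2 hxv; by [].
Qed.

Lemma connect_map (U2 : finType) (r2 : rel U2) (f : U -> U2) :
  (forall x y, r x y -> connect r2 (f x) (f y)) ->
  forall x y, connect r x y -> connect r2 (f x) (f y).
Proof.
move=> H x y /connectP [p]; elim: p x => [|z p IH] x /=; first by move=> _ ->.
case/andP => hxz hp hy; exact: connect_trans (H _ _ hxz) (IH _ hp hy).
Qed.
End Aux.

Theorem lemma1 (T : finType) (e : rel T) (he_sym : symmetric e)
    (he_irr : irreflexive e) (s t : T) (hst : s != t) (k : int) :
  (exists S : {set T},
      [/\ s \notin S, t \notin S, ~~ has_path_avoiding e S s t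
        & (#|closed_nbhd e S|%:Z <= k)%R])
  <->
  (exists S' : {set (T + bool)%type},
      [/\ s' T \notin S', t' T \notin S',
          ~~ has_path_avoiding (graph_power (ext_graph e s t) 3) S' (s' T) (t' T)
        & (#|S'|%:Z <= k)%R]).
Proof.
set ext := ext_graph e s t.
have ext_sym : symmetric ext.
  by case=> [a|[]] [b|[]] //=; rewrite ?he_sym // eq_sym.
have G3 : forall X : {set (T + bool)%type}, forall x y, x \notin X -> y \notin X ->
    within_dist ext 3 x y -> connect (del_verts (graph_power ext 3) X) x y.
  move=> X x y hx hy hw; have [/eqP->|hne] := boolP (x == y); first exact: connect0.
  by apply: connect1; rewrite /del_verts hx hy /graph_power hne hw.
split.
- case=> S [hs ht hnp hk].
  set N := closed_nbhd e S.
  exists (inl @: N); split.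
  + by apply/imsetP; case.
  + by apply/imsetP; case.
  + set f : (T + bool)%type -> T := fun x => match x with inl a => a | inr b => if b then t else s end.
    set notA : (T + bool)%type -> bool := fun x => match x with inl a => a \notin S | inr _ => true end.
    have fnS : forall x, notA x -> f x \notin S by case=> [a|[]].
    have P1 : forall x y, ext x y -> notA x -> notA y ->
        connect (del_verts e S) (f x) (f y).
      move=> x y hxy hx hy.
      have [hfe|hne] := boolP (f x == f y); first by rewrite (eqP hfe) connect0.
      apply: connect1; rewrite /del_verts !fnS //=.
      move: hxy hne; case: x {hx} => [a|[]]; case: y {hy} => [b|[]] //=;
        by move=> /eqP-> ; rewrite eqxx.
    have P2 : forall u p, path ext u p -> all notA (u :: p) ->
        connect (del_verts e S) (f u) (f (last u p)).
      move=> u p; elim: p u => [|z p IH] u /=; first by move=> _ _; exact: connect0.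
      case/andP=> h1 h2 /and3P[hu hz hp].
      apply: connect_trans (P1 _ _ h1 hu hz) _; apply: IH => //=; by rewrite hz.
    have inN : forall x, ~~ notA x -> x \in inl @: N.
      case=> [a|b] //= ha; rewrite mem_imset; last by move=> ? ? [].
      by rewrite /N /closed_nbhd inE (negPn ha).
    have nbrN : forall x y, ext x y -> ~~ notA x -> y \in inl @: N.
      case=> [a|b] [c|d] //= hxy ha.
        rewrite mem_imset; last by move=> ? ? [].
        rewrite /N /closed_nbhd !inE; apply/orP; right; apply/existsP; exists a.
        by rewrite (negPn ha) hxy.
      move: hxy ha; case: d => /eqP->; by rewrite ?ht ?hs.
    have nA : forall x, x \notin inl @: N -> notA x.
      by move=> x hx; apply/negPn/negP=> /inN; rewrite (negPf hx).
    have E : forall x y, del_verts (graph_power ext 3) (inl @: N) x y ->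
        connect (del_verts e S) (f x) (f y).
      move=> x y /and3P[hx hy /andP[_ hw]].
      have [p [hp hl hsz]] := wd_path hw.
      rewrite -hl; apply: P2 => //.
      have hA1 : forall z, ext x z -> notA z.
        move=> z hz; apply/negPn/negP=> hz'.
        by move: (nbrN _ _ (etrans (ext_sym z x) hz) hz'); rewrite (negPf hx).
      have hA2 : forall z, ext z y -> notA z.
        move=> z hz; apply/negPn/negP=> hz'.
        by move: (nbrN _ _ hz hz'); rewrite (negPf hy).
      move: hp hl hsz; case: p => [|a [|b [|c [|d q]]]] //= hp hl _;
        rewrite (nA _ hx) /= ?andbT //.
      * by rewrite hl nA.
      * move: hp => /and3P[h1 h2 _].
        by rewrite hA1 // hl nA.
      * move: hp => /and4P[h1 h2 h3 _].
        by rewrite hA1 // hA2 -?hl // hl nA.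
    apply/negP=> /andP[_ hc].
    have := connect_map E hc; rewrite /= => hc'.
    by move: hnp; rewrite /has_path_avoiding hs hc'.
  + by rewrite card_imset //; move=> ? ? [].
- case=> X [hs hT hnp hk].
  set S := [set v : T | [forall u, ((u == inl v) || ext (inl v) u) ==> (u \in X)]].
  have hnS : forall a, a \notin S -> exists u, (u \notin X) && ((u == inl a) || ext (inl a) u).
    move=> a; rewrite inE negb_forall => /existsP[u]; rewrite negb_imply => /andP[h1 h2].
    by exists u; rewrite h1 h2.
  have sS : s \notin S.
    rewrite inE negb_forall; apply/existsP; exists (s' T); rewrite negb_imply hs /=.
    by rewrite /ext /= eqxx ?orbT.
  have tS : t \notin S.
    rewrite inE negb_forall; apply/existsP; exists (t' T); rewrite negb_imply hT /=.
    by rewrite /ext /= eqxx ?orbT.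
  have near1 : forall x y, (x == y) || ext x y -> within_dist ext 1 x y.
    move=> x y /orP[/eqP->|h] /=; first by rewrite eqxx.
    by apply/orP; right; apply/existsP; exists x; rewrite eqxx h.
  have wd1 : forall x y, within_dist ext 1 x y -> within_dist ext 1 y x.
    move=> x y /orP[/eqP->|/existsP[w /andP[/eqP<- h]]]; first by rewrite /= eqxx.
    by apply: near1; rewrite ext_sym h orbT.
  exists S; split=> //.
  + set rep := fun a : T => odflt (inl a) [pick u | (u \notin X) && ((u == inl a) || ext (inl a) u)].
    have repP : forall a, a \notin S -> (rep a \notin X) && ((rep a == inl a) || ext (inl a) (rep a)).
      move=> a /hnS ex; rewrite /rep; case: pickP => [u hu|h] //=.
      by case: ex => u hu; rewrite h in hu.
    have E : forall a b, del_verts e S a b ->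
        connect (del_verts (graph_power ext 3) X) (rep a) (rep b).
      move=> a b /and3P[ha hb hab].
      have /andP[ra ra'] := repP _ ha; have /andP[rb rb'] := repP _ hb.
      apply: G3 => //.
      have h1 : within_dist ext 1 (rep a) (inl a) by apply: wd1; apply: near1; rewrite eq_sym.
      have h2 : within_dist ext 1 (inl a) (inl b) by apply: near1; rewrite orbC /ext /= hab.
      have h3 : within_dist ext 1 (inl b) (rep b) by apply: near1; rewrite eq_sym.
      exact: (wd_trans (wd_trans h1 h2) h3).
    apply/negP; rewrite /has_path_avoiding sS /= => hc.
    have hc' := connect_map E hc.
    have /andP[rs rs'] := repP _ sS; have /andP[rt rt'] := repP _ tS.
    move: hnp; rewrite /has_path_avoiding hs /=; apply/negP/negPn.
    apply: connect_trans (connect_trans _ hc') _.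
    * apply: G3 => //; apply: wd_S.
      have h1 : within_dist ext 1 (s' T) (inl s) by apply: near1; rewrite /ext /= eqxx ?orbT.
      have h2 : within_dist ext 1 (inl s) (rep s) by apply: near1; rewrite eq_sym.
      exact: (wd_trans h1 h2).
    * apply: G3 => //; apply: wd_S.
      have h1 : within_dist ext 1 (inl t) (t' T) by apply: near1; rewrite /ext /= eqxx ?orbT.
      have h2 : within_dist ext 1 (rep t) (inl t) by apply: wd1; apply: near1; rewrite eq_sym.
      exact: (wd_trans h2 h1).
  + apply: le_trans hk; rewrite lez_nat.
    have inj : injective (@inl T bool) by move=> ? ? [].
    rewrite -(card_imset (mem (closed_nbhd e S)) inj).
    apply: subset_leq_card; apply/subsetP => x /imsetP[a ha ->].
    move: ha; rewrite /closed_nbhd !inE => /orP[ha|/existsP[u /andP[hu hua]]].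
      move: ha => /fintype.forallP H; by move: (H (inl a)); rewrite eqxx.
    move: hu; rewrite inE => /forallP H; move: (H (inl a)); rewrite /ext /= hua orbT; apply.
Qed.
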